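(* Let $X$ be a compact metric space, $f:X\to X$ a continuous minimal map, $H$ the homeo-part of $f$, and $P$ a residual subset of $X$. Then there is a set $R\subseteq X$ such that (1) $R\subseteq P\cap H$ and $R$ is residual in $X$; (2) $f(R)=R=f^{-1}(R)$; (3) both $f|_R$ and $(f|_R)^{-1}$ are minimal homeomorphisms $R\to R$.
   Context: Minimal: every forward orbit dense (for the compact space $X$, equivalently no proper nonempty closed invariant subset); for the (possibly non-compact) $R$, minimality of a map means every forward orbit is dense in $R$. Homeo-part of $f$: the set $H$ of all $x_0\in X$ whose full orbit $\{x\in X:\exists i,j\ge0,\ f^i(x)=f^j(x_0)\}$ has the form $\{\dots,x_{-1},x_0,x_1,\dots\}$ with $f(x_n)=x_{n+1}$ for all integers $n$. Residual: complement of a countable union of nowhere dense sets. *)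

(* Defs.v *)
From HB Require Import structures.
From mathcomp Require Import all_boot all_order all_algebra.
From mathcomp Require Import all_classical all_reals all_analysis.
Set Implicit Arguments. Unset Strict Implicit. Unset Printing Implicit Defensive.
Import Order.TTheory GRing.Theory Num.Theory.
Local Open Scope classical_set_scope.
Local Open Scope ring_scope.

Definition forward_orbit {T : Type} (f : T -> T) (x : T) : set T :=
  range (fun n : nat => iter n f x).

Definition minimal_map {T : topologicalType} (f : T -> T) : Prop :=
  forall x : T, dense (forward_orbit f x).

(* minimality of the map f restricted to A (with the subspace topology):
   every forward orbit of a point of A is dense in A, i.e. meets every
   nonempty relatively open subset O `&` A of A. *)
Definition minimal_on {T : topologicalType} (A : set T) (f : T -> T) : Prop :=
  forall x : T, A x ->
    forall O : set T, open O -> O `&` A !=set0 -> O `&` forward_orbit f x !=set0.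

Definition full_orbit {T : Type} (f : T -> T) (x0 : T) : set T :=
  [set x | exists i j : nat, iter i f x = iter j f x0].

Definition homeo_part {T : Type} (f : T -> T) : set T :=
  [set x0 | exists s : int -> T,
      [/\ s 0%R = x0, (forall n : int, f (s n) = s (n + 1)%R)
        & full_orbit f x0 = range s]].

Definition nowhere_dense {T : topologicalType} (A : set T) : Prop :=
  interior (closure A) = set0.

Definition residual {T : topologicalType} (P : set T) : Prop :=
  exists F : nat -> set T, (forall n, nowhere_dense (F n)) /\
    P = ~` \bigcup_n F n.

(* Main.v *)
Require Import Defs.
From HB Require Import structures.
From mathcomp Require Import all_boot all_order all_algebra.
From mathcomp Require Import all_classical all_reals all_analysis.
From mathcomp Require Import zify.
Import Order.TTheory GRing.Theory Num.Theory.
Local Open Scope classical_set_scope.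
Local Open Scope ring_scope.

Section Dyn.
Variables (R : realType) (X : metricType R) (f : X -> X).
Hypotheses (cX : compact [set: X]) (cf : continuous f) (mf : minimal_map f).

Lemma hX : hausdorff_space X.
Proof. exact: metric_hausdorff. Qed.

Lemma closed_image (Y : set X) : closed Y -> closed (f @` Y).
Proof.
move=> cY; apply: compact_closed; first exact: hX.
apply: continuous_compact; first exact: continuous_subspaceT.
exact: (subclosed_compact cY cX).
Qed.

Lemma iter_cont k : continuous (iter k f).
Proof.
elim: k => [|k IH] x /=; first exact: cvg_id.
change {for x, continuous (f \o iter k f)}.
by apply: continuous_comp; [exact: IH| exact: cf].
Qed.

Lemma iter_u (u : nat -> X) : (forall n, f (u n.+1) = u n) ->
  forall k n, iter k f (u (n + k)%N) = u n.
Proof.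
move=> hu; elim=> [|k IH] n; first by rewrite addn0.
by rewrite iterSr addnS hu IH.
Qed.

Lemma GL (u : nat -> X) (Y : set X) : closed Y -> (forall n, Y (u n)) ->
  (forall n, f (u n.+1) = u n) -> Y = setT.
Proof.
move=> cY Yu hu.
have [p [_ clp]] : [set: X] `&` cluster (u @ \oo) !=set0.
  by apply: cX => //; exact: filterT.
have sub : forward_orbit f p `<=` Y.
  move=> _ [k _ <-]; apply: cY => B nB.
  have nB' : nbhs p (iter k f @^-1` B) by exact: (iter_cont k p B nB).
  have uA : (u @ \oo) (u @` [set n | (k <= n)%N]).
    by exists k => // n /= kn; exists n.
  have [_ [[n kn <-] Bn]] := clp _ _ uA nB'.
  exists (u (n - k)%N); split; first exact: Yu.
  by move: Bn; rewrite /= -{1}(subnK kn) iter_u.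
apply/seteqP; split => // x _; apply: contrapT => Yx.
have [y [Oy [k _ yk]]] := mf p (~` Y) (ex_intro _ x Yx) (closed_openC cY).
by apply: Oy; apply: sub; exists k.
Qed.


Lemma fsurj x : exists y, f y = x.
Proof.
apply: contrapT => nx.
have cY := @closed_image setT closedT.
have [y [Oy [k _ yk]]] := mf (f x) (~` (f @` setT)) (ex_intro _ x
   (fun h => nx (let: ex_intro2 y _ e := h in ex_intro _ y e))) (closed_openC cY).
by apply: Oy; rewrite -yk -iterSr /=; exists (iter k f x).
Qed.

Lemma Lpre (Y : set X) : closed Y -> (forall x, exists y, Y y /\ f y = x) -> Y = setT.
Proof.
move=> cY hY; have [h hh] := choice hY.
apply/seteqP; split => // x _.
have := @GL (fun n => iter n.+1 h x) Y cY.
rewrite -/(setT x).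
move=> ->// n; first by case: (hh (iter n h x)).
by case: (hh (iter n.+1 h x)).
Qed.

Lemma Kd (Y D : set X) : closed Y -> D `<=` f @` Y -> closure D = setT -> Y = setT.
Proof.
move=> cY DY cD; apply: Lpre => // x.
have : closure D `<=` f @` Y.
  move=> z /(closureS DY); exact: (closed_image _ cY).
rewrite cD => /(_ x I) [y Yy <-]; by exists y.
Qed.

Lemma dense_set (W S : set X) : open W -> W `<=` closure S ->
  closure (~` W `|` (W `&` S)) = setT.
Proof.
move=> oW WS; apply/seteqP; split => // x _ B nB.
have [Wx|Wx] := pselect (W x).
  have nWB : nbhs x (W `&` B) by apply: filterI => //; exact: open_nbhs_nbhs.
  have [z [Sz [Wz Bz]]] := WS x Wx _ nWB.
  by exists z; split => //; right.
by exists x; split; [left|exact: nbhs_singleton].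
Qed.

Lemma closure_notcl (N : set X) : nowhere_dense N -> closure (~` closure N) = setT.
Proof. by move=> nN; rewrite closure_setC nN setC0. Qed.

Lemma cl_pre (N : set X) : closure (f @^-1` N) `<=` f @^-1` closure N.
Proof.
move=> w cw B nB; have := cw _ (cf w B nB).
by case=> v [Nv Bv]; exists (f v).
Qed.

Lemma nd_pre N : nowhere_dense N -> nowhere_dense (f @^-1` N).
Proof.
move=> nN; apply/seteqP; split => // x Ux.
have hY := @Kd (~` interior (closure (f @^-1` N))) (~` closure N) _ _ (closure_notcl _ nN).
have : (~` interior (closure (f @^-1` N))) x.
  rewrite hY //; first by rewrite closedC; exact: open_interior.
  move=> z nz; have [w wz] := fsurj z; exists w => // Uw; apply: nz.
  by rewrite -wz; apply: cl_pre; exact: interior_subset.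
by [].
Qed.

Lemma nd_img N : nowhere_dense N -> nowhere_dense (f @` N).
Proof.
move=> nN; apply/seteqP; split => // x Wx.
have oW : open (closure (f @` N))° := open_interior _.
pose O := f @^-1` (closure (f @` N))° `&` ~` closure N.
have oO : open O.
  apply: openI; last by apply: closed_openC; exact: closed_closure.
  by apply: open_comp => // y _; exact: cf.
have hY := Kd (~` O) (~` (closure (f @` N))° `|` ((closure (f @` N))° `&` f @` N))
  _ _ (dense_set _ _ oW (@interior_subset _ (closure (f @` N)))).
have Oe : forall y, ~ O y.
  move=> y Oy; have : (~` O) y; last by [].
  rewrite hY //; first by rewrite closedC.
  move=> z [nz|[Wz [n Nn <-]]].
    have [w wz] := fsurj z; exists w => //; by move=> [Ww _]; apply nz; rewrite -wz.
  by exists n => //; move=> [_]; apply; exact: subset_closure.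
have [w wx] := fsurj x.
have nW : nbhs w (f @^-1` (closure (f @` N))°).
  apply: cf; rewrite wx; apply: open_nbhs_nbhs; split => //.
have : (closure N)° w.
  apply: filterS nW => y Wy; apply: contrapT => ny; exact: (Oe y).
by rewrite nN.
Qed.

Definition Aset (n : nat) : set X :=
  [set x | exists y z, f y = x /\ f z = x /\ ~ ball y (n.+1%:R^-1 : R) z].

Lemma nd_A n : nowhere_dense (Aset n).
Proof.
apply/seteqP; split => // x Wx.
set W := (closure (Aset n))° in Wx *.
have oW : open W := open_interior _.
have [a [[y [z [ya [za nyz]]]] Wa]] : (Aset n) `&` W !=set0.
  exact: (interior_subset Wx W (open_nbhs_nbhs (conj oW Wx))).
pose e : R := n.+1%:R^-1.
have e0 : 0 < e / 2 by rewrite divr_gt0 // invr_gt0 ltr0n.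
pose O := f @^-1` W `&` (ball y (e / 2))°.
have oO : open O.
  apply: openI; last exact: open_interior.
  by apply: open_comp => // w _; exact: cf.
have hY := Kd (~` O) (~` W `|` (W `&` Aset n))
  _ _ (dense_set _ _ oW (@interior_subset _ (closure (Aset n)))).
have : (~` O) y; last by apply; split; [rewrite /= ya | exact: nbhsx_ballx].
rewrite hY //; first by rewrite closedC.
move=> c [nc|[Wc [y' [z' [hy [hz nb]]]]]].
  have [w wc] := fsurj c; exists w => //; by move=> [Ww _]; apply nc; rewrite -wc.
have [Oy'|Oy'] := pselect (O y'); last by exists y'.
have [Oz'|Oz'] := pselect (O z'); last by exists z'.
exfalso; apply: nb.
have by' := interior_subset Oy'.2; have bz' := interior_subset Oz'.2.
rewrite -/e [e]splitr; apply: ball_triangle (ball_sym by') bz'.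
Qed.

Lemma uniq_pre a b : f a = f b -> (forall n, ~ Aset n (f a)) -> a = b.
Proof.
move=> fab hA; apply: contrapT => nab.
have d0 : 0 < mdist a b by rewrite mdist_gt0; apply/eqP.
have [N _ /(_ N (leqnn _)) HN] := near_infty_natSinv_lt (PosNum d0).
apply: (hA N); exists a, b; do 2 split => //.
by rewrite ballEmdist /=; apply/negP; rewrite -leNgt ltW.
Qed.

Definition gi : X -> X := projT1 (choice fsurj).
Lemma fgi x : f (gi x) = x.
Proof. exact: (projT2 (choice fsurj) x). Qed.

Lemma iter_fg k x : iter k f (iter k gi x) = x.
Proof. by elim: k => [|k IH] //; rewrite iterSr iterS fgi. Qed.

Lemma full_orbit_f x : full_orbit f (f x) = full_orbit f x.
Proof.
apply/seteqP; split => y [i [j e]].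
  by exists i, j.+1; rewrite e iterSr.
by exists i.+1, j; rewrite iterS e -iterS iterSr.
Qed.

Lemma full_orbit_iter x y k : full_orbit f x y -> full_orbit f x (iter k f y).
Proof.
move=> [i [j e]]; exists i, (k + j)%N.
by rewrite -iterD [(i + k)%N]addnC iterD e -iterD.
Qed.

Lemma full_orbit_g x k : full_orbit f x (iter k gi x).
Proof. by exists k, 0%N; rewrite iter_fg. Qed.

Lemma full_orbit_fx x k : full_orbit f x (iter k f x).
Proof. by exists 0%N, k. Qed.

Definition good x := forall y, full_orbit f x y -> forall n, ~ Aset n y.

Lemma orbit_inj x a b i : good x -> full_orbit f x a -> full_orbit f x b ->
  iter i f a = iter i f b -> a = b.
Proof.
move=> gx oa ob; elim: i => [//|i IH] /= e; apply: IH.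
apply: uniq_pre => // n; apply: gx; exact: (full_orbit_iter _ _ i.+1 oa).
Qed.

Definition sq x (n : int) : X :=
  match n with Posz k => iter k f x | Negz k => iter k.+1 gi x end.

Lemma homeo x : good x -> homeo_part f x.
Proof.
move=> gx; exists (sq x); split => //.
  case=> [k|[|k]] /=.
  - by rewrite addn1.
  - by rewrite fgi.
  - by rewrite fgi subSS subn0.
apply/seteqP; split => y.
  move=> [i [j e]].
  have oy : full_orbit f x y by exists i, j.
  have [ij|ji] := leqP i j.
    exists (Posz (j - i)) => //=; apply/esym; apply: (orbit_inj _ _ _ i gx oy) => //.
      exact: full_orbit_fx.
    by rewrite e -iterD subnKC.
  have : exists k, (i - j = k.+1)%N by exists (i - j).-1; rewrite prednK // subn_gt0.
  case=> k ek; exists (Negz k) => //=; apply/esym; apply: (orbit_inj _ _ _ i gx oy) => //.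
    exact: (full_orbit_g x k.+1).
  by rewrite e -(subnKC (ltnW ji)) iterD ek -[gi (iter k gi x)]/(iter k.+1 gi x) iter_fg.
case=> [[k|k]] _ <- /=; first exact: full_orbit_fx.
exact: (full_orbit_g x k.+1).
Qed.

Lemma gi_cont x : (forall n, ~ Aset n x) -> {for x, continuous gi}.
Proof.
move=> hx.
have claim : forall q, cluster (gi @ nbhs x) q -> q = gi x.
  move=> q clq.
  have fq : f q = x.
    apply: hX => B C nB nC.
    have gC : (gi @ nbhs x) (gi @` C) by apply: filterS nC => c Cc; exists c.
    have [_ [[c Cc <-] Bc]] := clq _ _ gC (cf q B nB).
    by exists c; split => //; rewrite -(fgi c).
  by apply: uniq_pre; rewrite fq // fgi.
apply: (@compact_cluster_set1 X (gi x) (gi @ nbhs x) setT hX cX filterT _ filterT).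
apply/seteqP; split => [q /claim //| _ ->].
have [q [_ clq]] := cX (gi @ nbhs x) _ filterT.
by rewrite -(claim q clq).
Qed.

Lemma nd_iter_img k N : nowhere_dense N -> nowhere_dense (iter k f @` N).
Proof.
elim: k N => [|k IH] N nN.
  by rewrite (_ : iter 0 f @` N = N) //; apply/seteqP; split => [_ [y Ny <-]|y Ny] //; exists y.
have -> : iter k.+1 f @` N = iter k f @` (f @` N).
  rewrite image_comp; congr image; apply/funext => y; exact: iterSr.
exact/IH/nd_img.
Qed.

Lemma nd_iter_pre k N : nowhere_dense N -> nowhere_dense (iter k f @^-1` N).
Proof.
elim: k N => [|k IH] N nN //.
change (nowhere_dense (iter k f @^-1` (f @^-1` N))).
exact/IH/nd_pre.
Qed.

Lemma main P : residual P ->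
  exists RR : set X,
    [/\ RR `<=` P `&` homeo_part f, residual RR,
        f @` RR = RR, f @^-1` RR = RR &
        exists g : X -> X,
          [/\ (forall x, RR x -> g (f x) = x /\ f (g x) = x),
              g @` RR `<=` RR,
              {within RR, continuous f} /\ {within RR, continuous g},
              minimal_on RR f & minimal_on RR g]].
Proof.
move=> [F [nF hP]].
pose Gt (t : nat * nat * nat * bool) : set X := let: (i, j, n, b) := t in
  iter j f @^-1` (iter i f @` (if b then F n else Aset n)).
pose Gm (m : nat) : set X :=
  if @unpickle (nat * nat * nat * bool)%type m is Some t then Gt t else set0.
pose RR := ~` \bigcup_m Gm m.
pose gd x := forall y, full_orbit f x y -> (forall n, ~ F n y) /\ (forall n, ~ Aset n y).
have RRE : RR = gd.
  apply/seteqP; split => x.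
    move=> Rx y [i [j e]]; split=> n Hn; apply: Rx.
      by exists (pickle (i, j, n, true)) => //; rewrite /Gm pickleK /=; exists y.
    by exists (pickle (i, j, n, false)) => //; rewrite /Gm pickleK /=; exists y.
  move=> h [m _]; rewrite /Gm; case: unpickle => [[[[i j] n] b]|] //= [y Hy e].
  have oy : full_orbit f x y by exists i, j.
  by case: b Hy => Hy; [exact: (h y oy).1 n Hy| exact: (h y oy).2 n Hy].
have RRf x : RR (f x) = RR x by rewrite RRE /gd full_orbit_f.
have Rgd x : RR x -> gd x by rewrite RRE.
have RnA x : RR x -> forall n, ~ Aset n x.
  by move=> /Rgd h; apply: (h x (full_orbit_fx x 0)).2.
exists RR; split.
- move=> x Rx; split.
    rewrite hP => -[n _ Fn]; exact: ((Rgd x Rx) x (full_orbit_fx x 0)).1 n Fn.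
  by apply: homeo => y oy; exact: (Rgd x Rx y oy).2.
- exists Gm; split => // m; rewrite /Gm; case: unpickle => [[[[i j] n] b]|] /=.
    by rewrite /Gt; apply: nd_iter_pre; apply: nd_iter_img; case: b; [exact: nF | exact: nd_A].
  by rewrite /nowhere_dense closure0 interior0.
- apply/seteqP; split => [_ [y Ry <-]|x Rx]; first by rewrite RRf.
  by exists (gi x); [rewrite -RRf fgi | exact: fgi].
- by apply/seteqP; split => x /=; rewrite RRf.
exists gi; split.
- move=> x Rx; split; last exact: fgi.
  apply: uniq_pre; first by rewrite fgi.
  by rewrite fgi; apply: RnA; rewrite RRf.
- by move=> _ [y Ry <-]; rewrite -RRf fgi.
- split; first exact: continuous_subspaceT.
  apply: continuous_in_subspaceT => x /set_mem Rx; apply: gi_cont; exact: RnA.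
- by move=> x _ O oO [y [Oy _]]; exact: mf x O (ex_intro _ y Oy) oO.
move=> x _ O oO [y [Oy _]].
have cl := GL (fun n => iter n gi x) (closure (forward_orbit gi x)) (@closed_closure _ _)
  (fun n => @subset_closure _ _ _ (ex_intro2 _ _ n I erefl)) (fun n => fgi _).
have : closure (forward_orbit gi x) y by rewrite cl.
move/(_ O (open_nbhs_nbhs (conj oO Oy))) => [z [oz Oz]]; by exists z.
Qed.

End Dyn.

Theorem lemma5 (R : realType) (X : metricType R) (f : X -> X)
    (P : set X) :
  compact [set: X] ->
  continuous f ->
  minimal_map f ->
  residual P ->
  exists RR : set X,
    [/\ RR `<=` P `&` homeo_part f, residual RR,
        f @` RR = RR, f @^-1` RR = RR &
        exists g : X -> X,
          [/\ (forall x, RR x -> g (f x) = x /\ f (g x) = x),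
              g @` RR `<=` RR,
              {within RR, continuous f} /\ {within RR, continuous g},
              minimal_on RR f & minimal_on RR g]].
Proof. by move=> cX cf mf rP; apply: main. Qed.
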